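(* Let $P$ and $Q$ be probability distributions on a nonempty set $\mathcal{X}\subseteq\mathbb{R}^d$ and let $c\in(0,1)$. Let $\mathcal{F}$ be the set of measurable functions $h:\mathcal{X}\to\mathbb{R}$ with $\mathbb{E}_{X\sim P}[h(X)^2]<\infty$ and $\mathbb{E}_{Y\sim Q}[h(Y)^2]<\infty$. Assume $L_{P,Q,c}(h)>0$ for every $h\in\mathcal{F}$. Suppose $h^*\in\mathcal{F}$ minimizes the squared loss, i.e. $L_{P,Q,c}(h^* )=\min_{h\in\mathcal{F}}L_{P,Q,c}(h)$, and $\sigma_c(h^* )>0$. Then $h^*$ maximizes the signal-to-noise ratio: $\mathrm{SNR}(h^* )\ge \mathrm{SNR}(h)$ for every $h\in\mathcal{F}$ with $\sigma_c(h)>0$.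
   Context: For $h\in\mathcal{F}$ define: $\tau(P,Q\mid h)=\mathbb{E}_{X\sim P}[h(X)]-\mathbb{E}_{Y\sim Q}[h(Y)]$; $\sigma_c^2(h)=\dfrac{(1-c)\,\mathrm{Var}_{X\sim P}[h(X)]+c\,\mathrm{Var}_{Y\sim Q}[h(Y)]}{c(1-c)}$ with $\sigma_c(h)\ge0$; $\mathrm{SNR}(h)=\tau(P,Q\mid h)/\sigma_c(h)$ (defined when $\sigma_c(h)>0$); and $L_{P,Q,c}(h)=(1-c)\,\mathbb{E}_{X\sim P}[(1-h(X))^2]+c\,\mathbb{E}_{Y\sim Q}[h(Y)^2]$. *)

(* Defs.v *)
From mathcomp Require Import all_boot all_order all_algebra.
From mathcomp Require Import all_classical all_reals all_analysis.
Import numFieldNormedType.Exports.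
Set Implicit Arguments. Unset Strict Implicit. Unset Printing Implicit Defensive.
Import Order.TTheory GRing.Theory Num.Theory.
Local Open Scope classical_set_scope.
Local Open Scope ring_scope.

(* R^d = row vectors 'rV[R]_d, equipped with its Borel sigma-algebra
   (the sigma-algebra generated by the open sets of its product topology). *)
Definition borelRd (R : realType) (d : nat) :=
  g_sigma_algebraType (@open 'M[R]_(1, d)).

Section defs.
Context (R : realType) (d : nat).
Let T := borelRd R d.
Context (X : set T) (P Q : probability T R) (c : R).

(* E_{Z ~ mu}[f(Z)] for a distribution mu on X (real-valued; only used for
   functions in the class F, where it is finite). *)
Definition Ex (mu : probability T R) (f : T -> R) : R := Rintegral mu X f.

Definition Var (mu : probability T R) (f : T -> R) : R :=
  Ex mu (fun x => (f x - Ex mu f) ^+ 2).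

Definition inF (h : T -> R) : Prop :=
  measurable_fun X h /\
  (\int[P]_(x in X) ((h x) ^+ 2)%:E < +oo)%E /\
  (\int[Q]_(x in X) ((h x) ^+ 2)%:E < +oo)%E.

Definition tau (h : T -> R) : R := Ex P h - Ex Q h.

Definition sigma2 (h : T -> R) : R :=
  ((1 - c) * Var P h + c * Var Q h) / (c * (1 - c)).

Definition sigma (h : T -> R) : R := Num.sqrt (sigma2 h).

Definition SNR (h : T -> R) : R := tau h / sigma h.

Definition Lsq (h : T -> R) : R :=
  (1 - c) * Ex P (fun x => (1 - h x) ^+ 2) + c * Ex Q (fun x => (h x) ^+ 2).

End defs.

(* Main.v *)
Set Warnings "-all".
From mathcomp Require Import all_boot all_order all_algebra.
From mathcomp Require Import all_classical all_reals all_analysis.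
From mathcomp Require Import ring lra measurable_realfun.
Require Import Defs.
Import numFieldNormedType.Exports.
Import Order.TTheory GRing.Theory Num.Theory.
Local Open Scope classical_set_scope.
Local Open Scope ring_scope.

Set Implicit Arguments.
Section H.
Context (R : realType) (dd : measure_display) (T : measurableType dd).
Context (X : set T) (mu : probability T R) (mX : measurable X) (muX : mu X = 1%E).

Lemma int_of_lty (f : T -> R) : measurable_fun X f ->
  (\int[mu]_(x in X) (f x)%:E < +oo)%E -> (forall x, 0 <= f x) ->
  mu.-integrable X (EFin \o f).
Proof.
move=> mf fi f0; apply/integrableP; split; first exact/measurable_EFinP.
rewrite (le_lt_trans _ fi)//; apply: ge0_le_integral => //.
- by apply: measurableT_comp => //; exact/measurable_EFinP.
- exact/measurable_EFinP.
- by move=> x _ /=; rewrite ger0_norm.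
Qed.

Lemma lty_of_int (f : T -> R) : mu.-integrable X (EFin \o f) -> (forall x, 0 <= f x) ->
  (\int[mu]_(x in X) (f x)%:E < +oo)%E.
Proof.
move=> /integrableP[mf fi] f0; rewrite (le_lt_trans _ fi)//; apply: ge0_le_integral => //.
- by move=> x _; rewrite lee_fin.
- by apply: measurableT_comp => //.
- by move=> x _ /=; rewrite ger0_norm.
Qed.

Lemma int_cst k : mu.-integrable X (EFin \o cst k).
Proof. exact: finite_measure_integrable_cst. Qed.

Lemma int_h (h : T -> R) : measurable_fun X h ->
  mu.-integrable X (EFin \o (fun x => h x ^+ 2)) -> mu.-integrable X (EFin \o h).
Proof.
move=> mh ih2.
have i1 : mu.-integrable X (EFin \o (fun x => 1 + h x ^+ 2)).
  have := integrableD mX (int_cst 1) ih2.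
  by apply: eq_integrable => // x _ /=; rewrite EFinD.
apply: le_integrable i1 => //; first exact/measurable_EFinP.
move=> x _ /=; rewrite lee_fin [X in _ <= X]ger0_norm ?addr_ge0 ?sqr_ge0//.
rewrite -real_normK ?num_real//; have := normr_ge0 (h x); set y := `|h x|; move=> y0; have := sqr_ge0 (y - 1); nra.
Qed.

Lemma int_poly (h : T -> R) p0 p1 p2 : mu.-integrable X (EFin \o h) ->
  mu.-integrable X (EFin \o (fun x => h x ^+ 2)) ->
  mu.-integrable X (EFin \o (fun x => p0 + p1 * h x + p2 * h x ^+ 2)).
Proof.
move=> i1 i2.
have := integrableD mX (integrableD mX (int_cst p0) (integrableZl mX p1 i1)) (integrableZl mX p2 i2).
by apply: eq_integrable => // x _ /=; rewrite !EFinD !EFinM.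
Qed.

Lemma Ex_poly (h : T -> R) p0 p1 p2 : mu.-integrable X (EFin \o h) ->
  mu.-integrable X (EFin \o (fun x => h x ^+ 2)) ->
  \int[mu]_(x in X) (p0 + p1 * h x + p2 * h x ^+ 2) =
  p0 + p1 * \int[mu]_(x in X) h x + p2 * \int[mu]_(x in X) (h x ^+ 2).
Proof.
move=> i1 i2.
have j1 : mu.-integrable X (EFin \o (fun x => p1 * h x)).
  by apply: eq_integrable (integrableZl mX p1 i1) => // x _ /=; rewrite EFinM.
have j2 : mu.-integrable X (EFin \o (fun x => p2 * h x ^+ 2)).
  by apply: eq_integrable (integrableZl mX p2 i2) => // x _ /=; rewrite EFinM.
have j0 : mu.-integrable X (EFin \o (fun x => p0 + p1 * h x)).
  by apply: eq_integrable (integrableD mX (int_cst p0) j1) => // x _ /=; rewrite EFinD.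
rewrite RintegralD// RintegralD//; last exact: int_cst.
rewrite Rintegral_cst// (_ : fine _ = 1) ?mulr1; last exact: (congr1 fine muX).
by rewrite !RintegralZl.
Qed.
End H.

Section M.
Context (R : realType) (d : nat) (X : set (borelRd R d))
  (P Q : probability (borelRd R d) R) (c : R)
  (mX : measurable X) (PX : P X = 1%E) (QX : Q X = 1%E).

Lemma inF_ints g : inF X P Q g ->
  [/\ P.-integrable X (EFin \o g), P.-integrable X (EFin \o (fun x => g x ^+ 2)),
      Q.-integrable X (EFin \o g) & Q.-integrable X (EFin \o (fun x => g x ^+ 2))].
Proof.
move=> [mg [fP fQ]].
have mg2 : measurable_fun X (fun x => g x ^+ 2) by exact: measurable_funX.
have iP2 := int_of_lty P mX mg2 fP (fun x => sqr_ge0 _).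
have iQ2 := int_of_lty Q mX mg2 fQ (fun x => sqr_ge0 _).
by split => //; apply: (int_h _ mX).
Qed.

Lemma Var_eq (mu : probability (borelRd R d) R) (muX : mu X = 1%E) g :
  mu.-integrable X (EFin \o g) -> mu.-integrable X (EFin \o (fun x => g x ^+ 2)) ->
  Var X mu g = Ex X mu (fun x => g x ^+ 2) - Ex X mu g ^+ 2.
Proof.
move=> i1 i2; rewrite /Var /Ex.
set m := Rintegral mu X g.
rewrite (@eq_Rintegral _ _ _ _ _ (fun x => m ^+ 2 + (- 2 * m) * g x + 1 * g x ^+ 2)); last first.
  by move=> x _; ring.
rewrite (Ex_poly _ mX muX)//; rewrite -/m; ring.
Qed.

Lemma Ex_aff (mu : probability (borelRd R d) R) (muX : mu X = 1%E) g p0 p1 p2 :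
  mu.-integrable X (EFin \o g) -> mu.-integrable X (EFin \o (fun x => g x ^+ 2)) ->
  Ex X mu (fun x => p0 + p1 * g x + p2 * g x ^+ 2) =
  p0 + p1 * Ex X mu g + p2 * Ex X mu (fun x => g x ^+ 2).
Proof. by move=> i1 i2; rewrite /Ex (Ex_poly _ mX muX). Qed.

Lemma Lsq_aff g a b : inF X P Q g ->
  Lsq X P Q c (fun x => a + b * g x) =
  (1 - c) * (1 - (a + b * Ex X Q g) - b * tau X P Q g) ^+ 2 + c * (a + b * Ex X Q g) ^+ 2
  + b ^+ 2 * ((1 - c) * Var X P g + c * Var X Q g).
Proof.
move=> /inF_ints[i1 i2 j1 j2].
rewrite /Lsq.
rewrite (_ : Ex X P _ = Ex X P (fun x => (1 - a) ^+ 2 + (- 2 * (1 - a) * b) * g x + b ^+ 2 * g x ^+ 2)); last first.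
  by rewrite /Ex; apply: eq_Rintegral => x _; ring.
rewrite (_ : Ex X Q _ = Ex X Q (fun x => a ^+ 2 + (2 * a * b) * g x + b ^+ 2 * g x ^+ 2)); last first.
  by rewrite /Ex; apply: eq_Rintegral => x _; ring.
rewrite (Ex_aff _ PX) ?(Ex_aff _ QX) ?(Var_eq _ PX) ?(Var_eq _ QX) // /tau; ring.
Qed.

Lemma inF_aff g a b : inF X P Q g -> inF X P Q (fun x => a + b * g x).
Proof.
move=> hg; have [i1 i2 j1 j2] := inF_ints hg; case: hg => [mg _].
have mf : measurable_fun X (fun x => a + b * g x).
  apply: measurable_funD; first exact: measurable_cst.
  apply: measurable_funM => //; exact: measurable_cst.
split => //.
have e : {in X, (fun x => a ^+ 2 + (2 * a * b) * g x + b ^+ 2 * g x ^+ 2) =1 (fun x => (a + b * g x) ^+ 2)}.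
  by move=> x _; ring.
split; apply: (lty_of_int _ mX) => [|x]; try exact: sqr_ge0.
  by apply: eq_integrable (int_poly _ mX (a ^+ 2) (2 * a * b) (b ^+ 2) i1 i2) => // x xX /=; rewrite e.
by apply: eq_integrable (int_poly _ mX (a ^+ 2) (2 * a * b) (b ^+ 2) j1 j2) => // x xX /=; rewrite e.
Qed.
End M.
Lemma alg (R : realFieldType) (k V Vs t ts L s ss : R) :
  0 < k -> 0 < V -> 0 < Vs ->
  L <= k * V / (k * t ^+ 2 + V) ->
  L <= k * Vs / (k * ts ^+ 2 + Vs) ->
  k * (1 - ts) ^+ 2 + Vs <= L ->
  0 < s -> 0 < ss -> s ^+ 2 = V / k -> ss ^+ 2 = Vs / k ->
  t / s <= ts / ss.
Proof.
move=> k0 V0 Vs0 LU LUs LL s0 ss0 es ess.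
have D0 : 0 < k * t ^+ 2 + V by rewrite ltr_wpDl // mulr_ge0 ?sqr_ge0 // ltW.
have Ds0 : 0 < k * ts ^+ 2 + Vs by rewrite ltr_wpDl // mulr_ge0 ?sqr_ge0 // ltW.
have A : (k * (1 - ts) ^+ 2 + Vs) * (k * ts ^+ 2 + Vs) <= k * Vs.
  by rewrite -ler_pdivlMr //; apply: le_trans LL LUs.
have ts0 : 0 < ts.
  rewrite ltNge; apply/negP => tsn.
  have h1 : 1 <= (1 - ts) ^+ 2 by nra.
  have h2 : Vs <= k * ts ^+ 2 + Vs by rewrite lerDr mulr_ge0 ?sqr_ge0 // ltW.
  have h3 : (k + Vs) * Vs <= (k * (1 - ts) ^+ 2 + Vs) * (k * ts ^+ 2 + Vs).
    apply: ler_pM => //; try by rewrite ltW // addr_gt0.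
    by rewrite lerD2r -[X in X <= _]mulr1 ler_pM2l.
  have h4 := le_trans h3 A.
  have : 0 < Vs * Vs by rewrite mulr_gt0.
  rewrite mulrDl in h4; lra.
have B : k * Vs / (k * ts ^+ 2 + Vs) <= k * (1 - ts) ^+ 2 + Vs.
  rewrite ler_pdivrMr //.
  have : 0 <= (k * ts * (ts - 1) + Vs) ^+ 2 by apply: sqr_ge0.
  move=> h; rewrite -subr_ge0; apply: le_trans h _; rewrite le_eqVlt; apply/orP; left; apply/eqP; ring.
have C : k * Vs / (k * ts ^+ 2 + Vs) <= k * V / (k * t ^+ 2 + V).
  by apply: le_trans B (le_trans LL LU).
have C' : k * Vs * (k * t ^+ 2 + V) <= k * V * (k * ts ^+ 2 + Vs).
  move: C; rewrite ler_pdivrMr // mulrAC ler_pdivlMr //.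
have E : Vs * t ^+ 2 <= V * ts ^+ 2.
  have : k * (Vs * t ^+ 2) <= k * (V * ts ^+ 2) by nra.
  by rewrite ler_pM2l.
have F : (ss * t) ^+ 2 <= (s * ts) ^+ 2.
  rewrite !exprMn ess es mulrAC [X in _ <= X]mulrAC.
  by rewrite ler_pM2r ?invr_gt0.
rewrite ler_pdivrMr // mulrAC ler_pdivlMr //.
have sts : 0 < s * ts by rewrite mulr_gt0.
rewrite (mulrC t ss) (mulrC ts s).
case: (lerP (ss * t) 0) => [h|h]; first by apply: le_trans h (ltW sts).
nra.
Qed.

Theorem proposition1 (R : realType) (d : nat) (X : set (borelRd R d))
  (P Q : probability (borelRd R d) R) (c : R) :
  X !=set0 -> measurable X ->
  P X = 1%E -> Q X = 1%E ->
  0 < c < 1 ->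
  (forall h, inF X P Q h -> 0 < Lsq X P Q c h) ->
  forall hs : borelRd R d -> R,
  inF X P Q hs ->
  (forall h, inF X P Q h -> Lsq X P Q c hs <= Lsq X P Q c h) ->
  0 < sigma X P Q c hs ->
  forall h, inF X P Q h -> 0 < sigma X P Q c h ->
    SNR X P Q c h <= SNR X P Q c hs.
Proof.
move=> _ mX PX QX /andP[c0 c1] _ hs hsF hsmin sigs h hF sigh.
pose k := c * (1 - c).
have k0 : 0 < k by rewrite mulr_gt0 // subr_gt0.
pose V g := (1 - c) * Var X P g + c * Var X Q g.
have s2pos g : 0 < sigma X P Q c g -> 0 < V g / k.
  by rewrite /sigma sqrtr_gt0.
have Vpos g : 0 < sigma X P Q c g -> 0 < V g.
  move=> /s2pos H; have := mulr_gt0 H k0; by rewrite divfK ?gt_eqF.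
have sq g : 0 < sigma X P Q c g -> sigma X P Q c g ^+ 2 = V g / k.
  move=> /s2pos H; rewrite /sigma sqr_sqrtr //; exact: ltW.
have UB g : inF X P Q g -> 0 < V g ->
    Lsq X P Q c hs <= k * V g / (k * tau X P Q g ^+ 2 + V g).
  move=> gF Vg0.
  set t := tau X P Q g; set vv := V g; set m := Ex X Q g.
  have D0 : 0 < k * t ^+ 2 + vv by rewrite ltr_wpDl // mulr_ge0 ?sqr_ge0 // ltW.
  pose b := k * t / (k * t ^+ 2 + vv).
  pose u := (1 - c) * (1 - b * t).
  pose a := u - b * m.
  have := hsmin _ (inF_aff mX a b gF).
  rewrite (Lsq_aff c mX PX QX a b gF) -/t -/m.
  rewrite (_ : (1 - c) * Var X P g + c * Var X Q g = vv) //.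
  suff -> : (1 - c) * (1 - (a + b * m) - b * t) ^+ 2 + c * (a + b * m) ^+ 2 + b ^+ 2 * vv
     = k * vv / (k * t ^+ 2 + vv) by [].
  rewrite /a /u /b /k; field.
  by rewrite gt_eqF.
have LB : k * (1 - tau X P Q hs) ^+ 2 + V hs <= Lsq X P Q c hs.
  have e : Lsq X P Q c hs = Lsq X P Q c (fun x => 0 + 1 * hs x).
    by congr Lsq; apply: funext => x; rewrite add0r mul1r.
  rewrite e (Lsq_aff c mX PX QX 0 1 hsF) -/(V hs) /k.
  set t := tau X P Q hs; set m := Ex X Q hs.
  have := sqr_ge0 ((1 - c) * (1 - t) - m).
  nra.
rewrite /SNR.
apply: (@alg _ k (V h) (V hs) (tau X P Q h) (tau X P Q hs) (Lsq X P Q c hs) (sigma X P Q c h) (sigma X P Q c hs) k0 (Vpos _ sigh) (Vpos _ sigs) (UB _ hF (Vpos _ sigh)) (UB _ hsF (Vpos _ sigs)) LB sigh sigs (sq _ sigh) (sq _ sigs)).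
Qed.
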